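(* Every ergodic infinite permutation $\alpha$ has exactly one canonical representative.
   Context: An infinite permutation is an equivalence class of infinite real sequences $(a[n])_{n\ge 0}$ with pairwise distinct elements, under the relation $(a[n])\sim(b[n])$ iff for all $i,j$: $a[i]<a[j]\Leftrightarrow b[i]<b[j]$; any sequence in the class is a representative, and we write $\alpha[i]<\alpha[j]$ iff $a[i]<a[j]$ for a representative. A real sequence $(a[i])_{i\ge0}$ is canonical if (i) its elements are pairwise distinct, (ii) $0\le a[i]\le 1$ for all $i$, and (iii) for every $t\in[0,1]$ the ratio $\#\{0\le k<n : a[j+k]<t\}/n$ tends to $t$ as $n\to\infty$, uniformly in $j\ge 0$. An infinite permutation is ergodic if it has a canonical representative. *)

(* Defs.v *)
From Stdlib Require Import Reals.
Open Scope R_scope.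

Definition distinct_seq (a : nat -> R) : Prop :=
  forall i j : nat, i <> j -> a i <> a j.

(* An infinite permutation is an equivalence class of distinct sequences
   under this relation; a sequence b represents the class of a iff
   b is distinct and same_order a b. *)
Definition same_order (a b : nat -> R) : Prop :=
  forall i j : nat, a i < a j <-> b i < b j.

Fixpoint count_below (a : nat -> R) (j n : nat) (t : R) : nat :=
  match n with
  | O => O
  | S m => (count_below a j m t + (if Rlt_dec (a (j + m)%nat) t then 1 else 0))%nat
  end.

Definition canonical (a : nat -> R) : Prop :=
  distinct_seq a /\
  (forall i : nat, 0 <= a i <= 1) /\
  (forall t : R, 0 <= t <= 1 ->
     forall eps : R, eps > 0 ->
       exists N : nat, forall n j : nat, (n >= N)%nat -> (n > 0)%nat ->
         Rabs (INR (count_below a j n t) / INR n - t) < eps).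

Definition ergodic (a : nat -> R) : Prop :=
  exists b : nat -> R, same_order a b /\ canonical b.

(* Main.v *)
Require Import Defs.
From Stdlib Require Import Reals Lra Lia FunctionalExtensionality.
Open Scope R_scope.

Lemma count_eq (b c : nat -> R) (i j n : nat) :
  (forall k, b k < b i <-> c k < c i) ->
  count_below b j n (b i) = count_below c j n (c i).
Proof.
  intros H; induction n as [|n IH]; simpl; auto.
  rewrite IH.
  destruct (Rlt_dec (b (j+n)%nat) (b i)) as [h1|h1];
  destruct (Rlt_dec (c (j+n)%nat) (c i)) as [h2|h2]; auto;
  exfalso; [apply h2; apply H; exact h1 | apply h1; apply H; exact h2].
Qed.

Lemma canon_unique (a b c : nat -> R) :
  same_order a b -> canonical b -> same_order a c -> canonical c -> b = c.
Proof.
  intros Sb [_ [Rb Fb]] Sc [_ [Rc Fc]].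
  apply functional_extensionality; intro i.
  assert (Hk : forall k, b k < b i <-> c k < c i).
  { intro k; rewrite <- (Sb k i); apply Sc. }
  destruct (Req_dec (b i) (c i)) as [e|ne]; auto.
  set (eps := Rabs (b i - c i) / 2).
  assert (Hpos : eps > 0) by (unfold eps; assert (b i - c i <> 0) by lra; pose proof (Rabs_pos_lt _ H); lra) .
  destruct (Fb (b i) (Rb i) eps Hpos) as [N1 H1].
  destruct (Fc (c i) (Rc i) eps Hpos) as [N2 H2].
  set (n := S (Nat.max N1 N2)).
  assert (g1 : (n >= N1)%nat) by (unfold n; lia).
  assert (g2 : (n >= N2)%nat) by (unfold n; lia).
  assert (g0 : (n > 0)%nat) by (unfold n; lia).
  specialize (H1 n 0%nat g1 g0). specialize (H2 n 0%nat g2 g0).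
  rewrite (count_eq b c i 0 n Hk) in H1.
  set (x := INR (count_below c 0 n (c i)) / INR n) in *.
  assert (Rabs (b i - c i) <= Rabs (x - b i) + Rabs (x - c i)).
  { replace (b i - c i) with (-(x - b i) + (x - c i)) by ring.
    eapply Rle_trans; [apply Rabs_triang|]. rewrite Rabs_Ropp; lra. }
  unfold eps in *. lra.
Qed.

Theorem mainTheorem1 (a : nat -> R) :
  distinct_seq a -> ergodic a ->
  exists b : nat -> R,
    (same_order a b /\ canonical b) /\
    (forall c : nat -> R, same_order a c /\ canonical c -> c = b).
Proof.
  intros _ [b [Sb Cb]]. exists b. split; [auto|].
  intros c [Sc Cc]. symmetry. eapply canon_unique; eauto.
Qed.
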